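(* For all $n\ge2$ and $f_1,\dots,f_n:\mathscr{P}\to\mathbb{Q}$, $$f_1f_2\,|\,f_3\,|\,\cdots\,|\,f_n=f_1\,|\,f_2\,|\,\cdots\,|\,f_n+\sum_{A\sqcup B=\{3,\dots,n\}}\big(f_1\,|\,f_{A_1}\,|\,f_{A_2}\,|\,\cdots\big)\odot\big(f_2\,|\,f_{B_1}\,|\,f_{B_2}\,|\,\cdots\big),$$ where the sum is over ordered pairs $(A,B)$ of (possibly empty) disjoint sets with union $\{3,\dots,n\}$, $A_1,A_2,\dots$ enumerate the elements of $A$ and $B_1,B_2,\dots$ those of $B$, and a connected product with a single entry is that function itself.
   Context: $\mathscr{P}$ is the set of partitions. $f_1f_2$ is the pointwise product. Induced product: with $u_\lambda=\prod_{i:\lambda_i>0}u_{\lambda_i}$ and $\langle f\rangle_{\vec u}=\frac{\sum_\lambda f(\lambda)u_\lambda}{\sum_\lambda u_\lambda}\in\mathbb{Q}[[u_1,u_2,\dots]]$ (a linear bijection in $f$), $f\odot g$ is defined by $\langle f\odot g\rangle_{\vec u}=\langle f\rangle_{\vec u}\langle g\rangle_{\vec u}$. For functions $h_1,\dots,h_N$, the connected product is $h_1|\cdots|h_N=\sum_{\alpha\in\Pi(N)}\mu(\alpha,\mathbf{1})\bigodot_{C\in\alpha}h_C$, where $\Pi(N)$ is the set of set partitions of $\{1,\dots,N\}$, $\mu(\alpha,\mathbf{1})=(-1)^{\ell(\alpha)-1}(\ell(\alpha)-1)!$ with $\ell(\alpha)$ the number of blocks, and $h_C=\prod_{c\in C}h_c$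 (pointwise). *)

(* Defs.v *)
From mathcomp Require Import all_boot all_order all_algebra.
Set Implicit Arguments. Unset Strict Implicit. Unset Printing Implicit Defensive.
Import Order.TTheory GRing.Theory Num.Theory.
Local Open Scope ring_scope.

Definition is_intpart (s : seq nat) : bool :=
  sorted geq s && all (fun i => (0 < i)%N) s.
Definition intpart := {s : seq nat | is_intpart s}.

Definition pfun := intpart -> rat.

(* Formal power series in Q[[u_1,u_2,...]], stored by coefficients in the
   monomial basis: the monomial u_lambda = prod_i u_{lambda_i} corresponds
   bijectively to the partition lambda. *)
Definition series := intpart -> rat.

Definition ext (F : intpart -> rat) (s : seq nat) : rat :=
  match (insub s : option intpart) with Some p => F p | None => 0 end.

Fixpoint masks (k : nat) : seq bitseq :=
  if k is k'.+1 then [seq b :: m | b <- [:: true; false], m <- masks k']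
  else [:: [::]].

(* All (distinct) ways to write the multiset s as a union a + b. *)
Definition splits (s : seq nat) : seq (seq nat * seq nat) :=
  undup [seq (mask m s, mask (map negb m) s) | m <- masks (size s)].

(* Product of power series: u_a u_b = u_(a+b). *)
Definition smul (F G : series) : series :=
  fun l => \sum_(ab <- splits (val l)) ext F ab.1 * ext G ab.2.

Fixpoint sinv_rec (n : nat) (H : seq nat -> rat) (s : seq nat) : rat :=
  if n is n'.+1 then
    if s == [::] then (H [::])^-1
    else - (H [::])^-1 *
         \sum_(ab <- splits s | ab.1 != s) sinv_rec n' H ab.1 * H ab.2
  else (H [::])^-1.
Definition sinv (F : series) : series :=
  fun l => sinv_rec (size (val l)).+1 (ext F) (val l).

Definition Zser : series := fun _ => 1.

Definition avg (f : pfun) : series := smul f (sinv Zser).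

(* Induced product: the unique f (.) g with <f (.) g> = <f><g>;
   since <h> = h * Z^-1, this is h = <f><g> * Z. *)
Definition odot (f g : pfun) : pfun := smul (smul (avg f) (avg g)) Zser.

Definition pmul (f g : pfun) : pfun := fun l => f l * g l.
Definition pone : pfun := fun _ => 1.

Definition conn (N : nat) (h : 'I_N -> pfun) : pfun := fun l =>
  \sum_(P : {set {set 'I_N}} | partition P [set: 'I_N])
     ((-1) ^+ (#|P|.-1) * ((#|P|.-1)`!)%:R *
      (\big[odot/pone]_(C in P) (fun l' => \prod_(c in C) h c l')) l).

Definition connl (hs : seq pfun) : pfun :=
  conn (fun i : 'I_(size hs) => nth pone hs i).

(* Main.v *)
Require Import Defs.
From mathcomp Require Import all_boot all_order all_algebra.
From Stdlib Require Import FunctionalExtensionality.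
From HB Require Import structures.
From mathcomp Require Import ring.
From mathcomp Require Import zify.
Set Implicit Arguments. Unset Strict Implicit. Unset Printing Implicit Defensive.
Import Order.TTheory GRing.Theory Num.Theory.
Local Open Scope ring_scope.

Lemma masksP k m : (m \in masks k) = (size m == k).
Proof.
elim: k m => [|k IH] m /=; first by case: m.
rewrite cats0 mem_cat; case: m => [|b m'] /=.
  by apply/negP => /orP[] /mapP [].
have inj : forall c : bool, injective (cons c) by move=> c x y [].
rewrite eqSS -IH; case: b.
  rewrite (mem_map (inj true)).
  by apply/orP/idP => [[//|/mapP [] //]|]; left.
rewrite (mem_map (inj false)).
by apply/orP/idP => [[/mapP [] //|//]|]; right.
Qed.

Lemma splitsP s ab : reflect (exists2 m, size m = size s &
   ab = (mask m s, mask (map negb m) s)) (ab \in splits s).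
Proof.
rewrite /splits mem_undup; apply: (iffP mapP) => [[m]|[m]].
  by rewrite masksP => /eqP Hm ->; exists m.
by move=> Hm ->; exists m; rewrite ?masksP ?Hm.
Qed.

Lemma splits_uniq s : uniq (splits s).
Proof. exact: undup_uniq. Qed.

Lemma perm_mask_split m (s : seq nat) : size m = size s ->
  perm_eq (mask m s ++ mask (map negb m) s) s.
Proof.
elim: s m => [|x s IH] [|b m] //= [Hm]; case: b => /=.
  by rewrite perm_cons IH.
change (perm_eq (mask m s ++ [:: x] ++ mask (map negb m) s) (x :: s)).
by rewrite perm_catCA /= perm_cons IH.
Qed.

Notation srt := (sorted geq).

Lemma geq_trans : transitive geq.
Proof. by move=> a b c /= H1 H2; exact: leq_trans H2 H1. Qed.

Lemma sorted_head_max x a z : srt (x :: a) -> z \in x :: a -> (z <= x)%N.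
Proof.
move=> Hs; rewrite inE => /orP[/eqP -> //|Hz].
by move: (order_path_min geq_trans Hs) => /allP /(_ z Hz).
Qed.

Lemma splits_char s a b : srt s ->
  ((a, b) \in splits s) = [&& srt a, srt b & perm_eq (a ++ b) s].
Proof.
move=> Hs; apply/splitsP/and3P => [[m Hm [-> ->]]|[Ha Hb Hp]].
  by split; [exact: (sorted_mask geq_trans)|exact: (sorted_mask geq_trans)|exact: perm_mask_split].
elim: s Hs a b Ha Hb Hp => [|x s IH] Hs a b Ha Hb Hp.
  move/perm_nilP: Hp; case: a b {Ha Hb} => [|? ?] [|? ?] // _.
  by exists [::].
have Hs' : srt s := path_sorted Hs.
have xin : x \in a ++ b by rewrite (perm_mem Hp) mem_head.
case: a Ha Hp xin => [|y a'] Ha Hp xin.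
  case: b Hb Hp xin => [|z b'] Hb Hp xin.
  all: try by move/perm_size: Hp.
  have zx : z = x.
    apply/eqP; rewrite eqn_leq (sorted_head_max Hb xin) andbT.
    by apply: (sorted_head_max Hs); rewrite -(perm_mem Hp) /= mem_head.
  subst z; rewrite /= perm_cons in Hp.
  have [m Hm [Em1 Em2]] := IH Hs' [::] b' (erefl _) (path_sorted Hb) Hp.
  by exists (false :: m); rewrite /= ?Hm // -Em1 -Em2.
have yx : (y <= x)%N by apply: (sorted_head_max Hs); rewrite -(perm_mem Hp) mem_head.
case: (eqVneq y x) => [E|Ne].
  subst y; rewrite /= perm_cons in Hp.
  have [m Hm [Em1 Em2]] := IH Hs' a' b (path_sorted Ha) Hb Hp.
  by exists (true :: m); rewrite /= ?Hm // -Em1 -Em2.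
have xa : x \notin y :: a'.
  apply/negP => Hx; move: (sorted_head_max Ha Hx) => xy.
  by move: Ne; rewrite eqn_leq yx xy.
have xb : x \in b by move: xin; rewrite mem_cat (negbTE xa).
clear xin; case: b Hb Hp xb => [|z b'] Hb Hp xb //.
have zx : z = x.
  apply/eqP; rewrite eqn_leq (sorted_head_max Hb xb) andbT.
  by apply: (sorted_head_max Hs); rewrite -(perm_mem Hp) mem_cat mem_head orbT.
subst z.
have Hp' : perm_eq ((y :: a') ++ b') s.
  rewrite -(perm_cons x); apply: perm_trans Hp.
  change (perm_eq ([:: x] ++ (y :: a') ++ b') ((y :: a') ++ [:: x] ++ b')).
  by rewrite perm_catCA.
have [m Hm [Em1 Em2]] := IH Hs' (y :: a') b' Ha (path_sorted Hb) Hp'.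
by exists (false :: m); rewrite /= ?Hm // -Em1 -Em2.
Qed.

Lemma sum_single (I : eqType) (r : seq I) x (F : I -> rat) :
  uniq r -> x \in r -> (forall y, y \in r -> y != x -> F y = 0) ->
  \sum_(y <- r) F y = F x.
Proof.
move=> Ur xr H; rewrite (big_rem x) //= big_seq_cond big1 ?addr0 //.
move=> y /andP[]; rewrite mem_rem_uniq // => /andP[yx yr] _; exact: H.
Qed.

Lemma intpart_srt s : is_intpart s -> srt s.
Proof. by case/andP. Qed.

Lemma splits_part s ab : is_intpart s -> ab \in splits s ->
  is_intpart ab.1 && is_intpart ab.2.
Proof.
case/andP=> Hs Hp /splitsP [m _ ->] /=.
by rewrite /is_intpart !sorted_mask ?all_mask //; exact: geq_trans.
Qed.

Lemma ext_val (F : intpart -> rat) (l : intpart) : ext F (val l) = F l.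
Proof. by rewrite /ext valK. Qed.

Lemma ext_part (F : intpart -> rat) s (H : is_intpart s) :
  ext F s = F (exist _ s H).
Proof. by rewrite /ext (insubT (fun s => is_intpart s) H). Qed.

Lemma ext_npart (F : intpart -> rat) s : ~~ is_intpart s -> ext F s = 0.
Proof. by move=> H; rewrite /ext insubF //; apply: negbTE. Qed.

Definition SM (F G : seq nat -> rat) s :=
  \sum_(ab <- splits s) F ab.1 * G ab.2.

Lemma ext_smul F G s : is_intpart s ->
  ext (smul F G) s = SM (ext F) (ext G) s.
Proof. by move=> H; rewrite (ext_part _ H). Qed.

Lemma smulE F G (l : intpart) : smul F G l = SM (ext F) (ext G) (val l).
Proof. by []. Qed.

Definition swp (p : seq nat * seq nat) := (p.2, p.1).

Lemma SMC F G s : srt s -> SM F G s = SM G F s.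
Proof.
move=> Hs; rewrite /SM.
have injsw : injective swp.
  by move=> [? ?] [? ?] [-> ->].
have -> : \sum_(ab <- splits s) F ab.1 * G ab.2 =
          \sum_(ab <- map swp (splits s)) G ab.1 * F ab.2.
  by rewrite big_map; apply: eq_bigr => ab _; rewrite mulrC.
apply: perm_big; apply: uniq_perm; rewrite ?map_inj_uniq ?splits_uniq //.
move=> [a b]; apply/mapP/idP => [[[c d] Hcd [-> ->]]|Hab].
  move: Hcd; rewrite !splits_char //; case/and3P=> -> -> /=.
  by rewrite perm_catC.
exists (b, a) => //; move: Hab; rewrite !splits_char //; case/and3P=> -> -> /=.
by rewrite perm_catC.
Qed.

Definition trip := (seq nat * seq nat * seq nat)%type.

Lemma geq_total : total geq.
Proof. by move=> x y; rewrite /= leq_total. Qed.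

Lemma geq_anti : antisymmetric geq.
Proof. by move=> x y /andP[H1 H2]; apply/eqP; rewrite eqn_leq; apply/andP. Qed.

Definition L1 s : seq trip :=
  [seq (cd.1, cd.2, ab.2) | ab <- splits s, cd <- splits ab.1].
Definition L2 s : seq trip :=
  [seq (ab.1, cd.1, cd.2) | ab <- splits s, cd <- splits ab.2].

Definition tripP s (t : trip) :=
  [&& srt t.1.1, srt t.1.2, srt t.2 & perm_eq (t.1.1 ++ t.1.2 ++ t.2) s].

Lemma L1P s t : srt s -> (t \in L1 s) = tripP s t.
Proof.
move=> Hs; apply/allpairsPdep/idP => [[[a b] [[c d] []]]|].
  rewrite /= splits_char // => /and3P[Ha Hb Hp].
  rewrite splits_char // => /and3P[Hc Hd Hp2] ->.
  rewrite /tripP /= Hc Hd Hb /= catA.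
  by apply: perm_trans Hp; rewrite perm_cat2r.
case: t => [[c d] b] /and4P[/= Hc Hd Hb Hp].
exists (sort geq (c ++ d), b), (c, d); split => //.
  rewrite splits_char // sort_sorted ?geq_total //= Hb /=.
  by apply: perm_trans Hp; rewrite catA perm_cat2r perm_sort.
rewrite [X in X \in _]surjective_pairing splits_char; last exact: (sort_sorted geq_total).
by rewrite Hc Hd /= perm_sym perm_sort.
Qed.

Lemma L2P s t : srt s -> (t \in L2 s) = tripP s t.
Proof.
move=> Hs; apply/allpairsPdep/idP => [[[a b] [[c d] []]]|].
  rewrite /= splits_char // => /and3P[Ha Hb Hp].
  rewrite splits_char // => /and3P[Hc Hd Hp2] ->.
  rewrite /tripP /= Hc Hd Ha /=.
  by apply: perm_trans Hp; rewrite perm_cat2l.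
case: t => [[a c] d] /and4P[/= Ha Hc Hd Hp].
exists (a, sort geq (c ++ d)), (c, d); split => //.
  rewrite splits_char // sort_sorted ?geq_total //= Ha /=.
  by apply: perm_trans Hp; rewrite perm_cat2l perm_sort.
rewrite [X in X \in _]surjective_pairing /= splits_char; last exact: (sort_sorted geq_total).
by rewrite Hc Hd /= perm_sym perm_sort.
Qed.

Lemma L1_uniq s : srt s -> uniq (L1 s).
Proof.
move=> Hs; apply: allpairs_uniq_dep; first exact: splits_uniq.
  by move=> ab _; exact: splits_uniq.
move=> p p' /allpairsPdep [x [y [Hx Hy E]]] /allpairsPdep [x' [y' [Hx' Hy' E']]].
subst p p' => /= [[E1 E2 E3]].
have Ey : y = y' by case: y y' E1 E2 {Hy Hy'} => [? ?] [? ?] /= -> ->.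
subst y'.
suff Ex : x = x' by subst x'.
case: x x' E3 Hx Hx' Hy Hy' => [a b] [a' b'] /= -> Hx Hx' Hy Hy'; congr pair.
move: Hx Hx'; rewrite !splits_char // => /and3P[Ha Hb _] /and3P[Ha' Hb' _].
move: Hy Hy'; clear -Hs Ha Ha' Hb Hb'; case: y => [c d]; rewrite !splits_char //.
move=> /and3P[_ _ P1] /and3P[_ _ P2].
apply: (sorted_eq geq_trans geq_anti) => //.
by apply: perm_trans P2; rewrite perm_sym.
Qed.

Lemma L2_uniq s : srt s -> uniq (L2 s).
Proof.
move=> Hs; apply: allpairs_uniq_dep; first exact: splits_uniq.
  by move=> ab _; exact: splits_uniq.
move=> p p' /allpairsPdep [x [y [Hx Hy E]]] /allpairsPdep [x' [y' [Hx' Hy' E']]].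
subst p p' => /= [[E1 E2 E3]].
have Ey : y = y' by case: y y' E2 E3 {Hy Hy'} => [? ?] [? ?] /= -> ->.
subst y'.
suff Ex : x = x' by subst x'.
case: x x' E1 Hx Hx' Hy Hy' => [a b] [a' b'] /= -> Hx Hx' Hy Hy'; congr pair.
move: Hx Hx'; rewrite !splits_char // => /and3P[Ha Hb _] /and3P[Ha' Hb' _].
move: Hy Hy'; clear -Hs Ha Ha' Hb Hb'; case: y => [c d]; rewrite !splits_char //.
move=> /and3P[_ _ P1] /and3P[_ _ P2].
apply: (sorted_eq geq_trans geq_anti) => //.
by apply: perm_trans P2; rewrite perm_sym.
Qed.

Lemma smulA F G H : smul (smul F G) H = smul F (smul G H).
Proof.
apply: functional_extensionality => l; rewrite !smulE.
have Hl : is_intpart (val l) := valP l.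
have Hs := intpart_srt Hl.
transitivity (\sum_(t <- L1 (val l)) ext F t.1.1 * ext G t.1.2 * ext H t.2).
  rewrite /L1 big_allpairs_dep /SM; apply: eq_big_seq => ab Hab /=.
  have /andP[H1 H2] := splits_part Hl Hab.
  by rewrite ext_smul // /SM mulr_suml.
rewrite (perm_big (L2 (val l))); last first.
  by apply: uniq_perm; rewrite ?L1_uniq ?L2_uniq // => t; rewrite L1P // L2P.
rewrite /L2 big_allpairs_dep /SM; apply: eq_big_seq => ab Hab /=.
have /andP[H1 H2] := splits_part Hl Hab.
rewrite ext_smul // /SM mulr_sumr; apply: eq_bigr => cd _; by rewrite mulrA.
Qed.

Lemma smulC F G : smul F G = smul G F.
Proof.
apply: functional_extensionality => l; rewrite !smulE.
exact/SMC/intpart_srt/(valP l).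
Qed.

Definition one : series := fun l => (val l == [::])%:R.

Lemma nil_part : is_intpart [::]. Proof. by []. Qed.

Lemma splits_nil2 s a : srt s -> (a, [::]) \in splits s -> a = s.
Proof.
move=> Hs; rewrite splits_char // => /and3P[Ha _]; rewrite cats0 => Hp.
exact: (sorted_eq geq_trans geq_anti).
Qed.

Lemma smul1 F : smul F one = F.
Proof.
apply: functional_extensionality => l; rewrite !smulE /SM.
have Hl : is_intpart (val l) := valP l.
have Hs := intpart_srt Hl.
rewrite (sum_single (x := (val l, [::]))) ?splits_uniq //.
- by rewrite /= ext_val (ext_part _ nil_part) /one /= mulr1.
- by rewrite splits_char // Hs /= cats0.
move=> [a b] Hab Hne /=.
have /andP[_ Hb] := splits_part Hl Hab.
rewrite (ext_part _ Hb) /one /=.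
case: (eqVneq b [::]) => [E|]; last by rewrite mulr0.
by subst b; move: Hne; rewrite (splits_nil2 Hs Hab) eqxx.
Qed.

Lemma splits_size s ab : srt s -> ab \in splits s -> ab.1 != s ->
  (size ab.1 < size s)%N.
Proof.
case: ab => a b Hs Hab Hne.
move: (Hab); rewrite splits_char // => /and3P[_ _ /perm_size]; rewrite size_cat.
case: b Hab Hne => [|x b] Hab Hne.
  by move: Hne; rewrite (splits_nil2 Hs Hab) eqxx.
by move=> <- /=; rewrite addnS ltnS leq_addr.
Qed.

Lemma sinv_fuel H n m s : srt s -> (size s < n)%N -> (size s < m)%N ->
  sinv_rec n H s = sinv_rec m H s.
Proof.
elim: n m s => [|n IH] [|m] s Hs //= Hn Hm.
case: eqP => // _; congr (_ * _).
rewrite big_seq_cond [RHS]big_seq_cond; apply: eq_bigr => ab /andP[Hab Hne].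
have Hsz := splits_size Hs Hab Hne.
move: (Hab); case: ab Hab Hne Hsz => a b Hab Hne Hsz.
rewrite splits_char // => /and3P[Ha _ _] /=.
by rewrite (IH m) // (leq_trans Hsz).
Qed.

Definition Zi := sinv Zser.

Lemma ext_Zser s : is_intpart s -> ext Zser s = 1.
Proof. by move=> H; rewrite (ext_part _ H). Qed.

Lemma ext_Zi s : is_intpart s -> ext Zi s = sinv_rec (size s).+1 (ext Zser) s.
Proof. by move=> H; rewrite (ext_part _ H). Qed.

Lemma smul_Zi : smul Zi Zser = one.
Proof.
apply: functional_extensionality => l; rewrite !smulE /SM /one.
have Hl : is_intpart (val l) := valP l.
have Hs := intpart_srt Hl.
case: (eqVneq (val l) [::]) => [E|Ne].
  rewrite E /splits /= big_cons big_nil addr0 ext_Zser // ext_Zi //= mulr1.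
  by rewrite ext_Zser // invr1.
rewrite (bigID (fun ab : seq nat * seq nat => ab.1 != val l)) /=.
rewrite [X in _ + X]big_mkcond /=.
rewrite (sum_single (x := (val l, [::]))) ?splits_uniq //; first last.
- move=> [a b] Hab Hne /=; case: eqP => // Ea; exfalso.
  subst a; move: (Hab); rewrite splits_char // => /and3P[_ _ /perm_size].
  rewrite size_cat; case: b Hab Hne => [|x b] Hab Hne; first by rewrite eqxx in Hne.
  by move/eqP; rewrite -{2}(addn0 (size _)) eqn_add2l.
- by rewrite splits_char // Hs /= cats0.
rewrite /= eqxx ext_Zser // ext_Zi // mulr1 /= (negbTE Ne) ext_Zser // invr1.
rewrite mulN1r; apply/eqP; rewrite subr_eq0; apply/eqP.
rewrite big_seq_cond [RHS]big_seq_cond; apply: eq_bigr => ab /andP[Hab Hne].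
have /andP[H1 H2] := splits_part Hl Hab.
rewrite ext_Zser // ext_Zi // !mulr1; apply: sinv_fuel => //.
  exact: intpart_srt.
exact: splits_size.
Qed.

Lemma one_smul F : smul one F = F.
Proof. by rewrite smulC smul1. Qed.

Lemma avg_odot f g : avg (odot f g) = smul (avg f) (avg g).
Proof. by rewrite /avg /odot smulA (smulC Zser) smul_Zi smul1. Qed.

Lemma odotA : associative odot.
Proof.
move=> f g h; rewrite [odot f (odot g h)]/odot avg_odot -smulA.
by rewrite -avg_odot.
Qed.

Lemma odotC : commutative odot.
Proof. by move=> f g; rewrite /odot (smulC (avg f)). Qed.

Lemma avg_pone : avg pone = one.
Proof. by rewrite /avg smulC; exact: smul_Zi. Qed.

Lemma odot1 : left_id pone odot.
Proof.
move=> f; rewrite /odot avg_pone one_smul /avg smulA smul_Zi; exact: smul1.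
Qed.

HB.instance Definition _ := Monoid.isComLaw.Build pfun pone odot odotA odotC odot1.

Lemma smul_sumL (I : Type) (r : seq I) (P : pred I) (c : I -> rat)
  (F : I -> series) G :
  smul (fun l => \sum_(i <- r | P i) c i * F i l) G =
  fun l => \sum_(i <- r | P i) c i * smul (F i) G l.
Proof.
apply: functional_extensionality => l; rewrite smulE /SM.
have E : forall s, ext (fun l => \sum_(i <- r | P i) c i * F i l) s =
                   \sum_(i <- r | P i) c i * ext (F i) s.
  move=> s; rewrite /ext; case: insubP => [u _ _|_] //.
  by rewrite big1 // => i _; rewrite mulr0.
under eq_bigr do rewrite E mulr_suml.
rewrite exchange_big /=; apply: eq_bigr => i _.
by rewrite smulE /SM mulr_sumr; apply: eq_bigr => ab _; rewrite mulrA.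
Qed.

Lemma odot_sumL (I : Type) (r : seq I) (P : pred I) (c : I -> rat)
  (F : I -> pfun) g :
  odot (fun l => \sum_(i <- r | P i) c i * F i l) g =
  fun l => \sum_(i <- r | P i) c i * odot (F i) g l.
Proof. by rewrite /odot /avg !smul_sumL. Qed.

Lemma odot_sumR (I : Type) (r : seq I) (P : pred I) (c : I -> rat)
  (F : I -> pfun) g :
  odot g (fun l => \sum_(i <- r | P i) c i * F i l) =
  fun l => \sum_(i <- r | P i) c i * odot g (F i) l.
Proof.
rewrite odotC odot_sumL; apply: functional_extensionality => l.
by apply: eq_bigr => i _; rewrite odotC.
Qed.

Section Comb.
Definition blk (T : finType) (h : T -> pfun) (C : {set T}) : pfun :=
  fun l' => \prod_(c in C) h c l'.
Definition W (T : finType) (h : T -> pfun) (P : {set {set T}}) : pfun :=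
  \big[odot/pone]_(C in P) blk h C.
Definition mu (k : nat) : rat := (-1) ^+ (k.-1) * ((k.-1)`!)%:R.
Definition cS (T : finType) (S : {set T}) (h : T -> pfun) : pfun := fun l =>
  \sum_(P : {set {set T}} | partition P S) mu #|P| * W h P l.
Definition sat (T T' : finType) (q : T -> T') (S : {set T}) (P : {set {set T}}) :=
  [forall x in S, forall y in S, (q x == q y) ==> (pblock P x == pblock P y)].

Lemma conn_cS N (h : 'I_N -> pfun) : conn h = cS [set: 'I_N] h.
Proof. by []. Qed.

Lemma pullback (T T' : finType) (q : T -> T') (S : {set T}) (h : T -> pfun)
  (surj : forall y, exists2 x, x \in S & q x = y) l :
  cS [set: T'] (fun y l => \prod_(x in S | q x == y) h x l) l =
  \sum_(P | partition P S && sat q S P) mu #|P| * W h P l.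
Proof.
pose pre (C : {set T'}) := S :&: q @^-1: C.
have injpre : injective pre.
  move=> C1 C2 E; apply/setP => y; have [x xS <-] := surj y.
  by move/setP: E => /(_ x); rewrite !inE xS.
pose Phi (P' : {set {set T'}}) := pre @: P'.
pose A := [set P' : {set {set T'}} | partition P' setT].
have PhiP : forall P', partition P' setT -> partition (Phi P') S && sat q S (Phi P').
  move=> P' HP'.
  have tP' := partition_trivIset HP'.
  have cP' := cover_partition HP'.
  have tPhi : trivIset (Phi P').
    apply/trivIsetP => _ _ /imsetP[C1 H1 ->] /imsetP[C2 H2 ->] Ne.
    have Ne' : C1 != C2 by apply: contraNneq Ne => ->.
    have D := (elimT trivIsetP tP') C1 C2 H1 H2 Ne'.
    rewrite -setI_eq0; apply/eqP/setP => x; rewrite !inE.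
    apply/negP => /andP[/andP[_ x1] /andP[_ x2]].
    by move/disjoint_setI0/setP: D => /(_ (q x)); rewrite !inE x1 x2.
  have pbl : forall x, x \in S -> pblock (Phi P') x = pre (pblock P' (q x)).
    move=> x xS; apply: def_pblock => //.
      by apply: imset_f; apply: pblock_mem; rewrite cP' inE.
    by rewrite !inE xS /= mem_pblock cP' inE.
  apply/andP; split.
    apply/and3P; split => //.
      apply/eqP/setP => x; apply/bigcupP/idP => [[_ /imsetP[C _ ->]]|xS].
        by rewrite inE => /andP[].
      exists (pre (pblock P' (q x))).
        by apply: imset_f; apply: pblock_mem; rewrite cP' inE.
      by rewrite !inE xS /= mem_pblock cP' inE.
    apply/imsetP => [[C HC E]].
    have := partition_neq0 HP' HC; case/set0Pn => y yC.
    have [x xS qx] := surj y.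
    by move/setP: E => /(_ x); rewrite !inE xS /= qx yC.
  apply/forallP => x; apply/implyP => xS; apply/forallP => y; apply/implyP => yS.
  by apply/implyP => /eqP E; rewrite pbl // pbl // E.
have PhiI : forall P, partition P S -> sat q S P -> P \in Phi @: A.
  move=> P HP sP.
  have tP := partition_trivIset HP.
  have cP := cover_partition HP.
  have satE : forall x y, x \in S -> y \in S -> q x = q y -> pblock P x = pblock P y.
    move=> x y xS yS E.
    by move/forallP: sP => /(_ x); rewrite xS /= => /forallP /(_ y); rewrite yS E eqxx /= => /eqP.
  have preq : forall B, B \in P -> pre (q @: B) = B.
    move=> B HB; apply/setP => x; rewrite !inE; apply/andP/idP => [[xS /imsetP[y yB E]]|xB].
      have yS : y \in S by rewrite -cP; apply/bigcupP; exists B.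
      have := satE x y xS yS E; rewrite (def_pblock tP HB yB) => <-.
      by rewrite mem_pblock cP.
    split; first by rewrite -cP; apply/bigcupP; exists B.
    by apply: imset_f.
  apply/imsetP; exists [set q @: (B : {set T}) | B in P].
    rewrite inE; apply/and3P; split.
    - apply/eqP/setP => y; rewrite inE; have [x xS <-] := surj y.
      apply/bigcupP; exists (q @: pblock P x); first by apply: imset_f; apply: pblock_mem; rewrite cP.
      by apply: imset_f; rewrite mem_pblock cP.
    - apply/trivIsetP => _ _ /imsetP[B1 H1 ->] /imsetP[B2 H2 ->] Ne.
      rewrite -setI_eq0; apply/eqP/setP => z; rewrite !inE.
      apply/negP => /andP[/imsetP[x1 x1B E1] /imsetP[x2 x2B E2]].
      have x1S : x1 \in S by rewrite -cP; apply/bigcupP; exists B1.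
      have x2S : x2 \in S by rewrite -cP; apply/bigcupP; exists B2.
      have := satE x1 x2 x1S x2S; rewrite -E1 -E2 => /(_ erefl).
      by rewrite (def_pblock tP H1 x1B) (def_pblock tP H2 x2B) => E; rewrite E eqxx in Ne.
    - apply/imsetP => [[B HB /esym/eqP]]; rewrite imset_eq0 => /eqP E.
      by move: (partition_neq0 HP HB); rewrite E eqxx.
  rewrite /Phi -imset_comp; apply/setP => B; apply/idP/imsetP => [HB|[B' HB' ->]].
    by exists B => //; rewrite /= preq.
  by rewrite /= preq.
rewrite /cS.
transitivity (\sum_(P' in A) mu #|Phi P'| * W h (Phi P') l).
  apply: eq_big => P'; first by rewrite inE.
  move=> HP'; congr (_ * _); first by rewrite card_imset.
  rewrite /W /Phi big_imset; last by move=> ? ? _ _; apply: injpre.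
  congr (_ l); apply: eq_bigr => C _; apply: functional_extensionality => l'.
  rewrite /blk (partition_big q (mem C)) /=; last by move=> x; rewrite !inE => /andP[].
  apply: eq_bigr => y yC; apply: eq_bigl => x; rewrite !inE.
  by case: eqP => [->|]; rewrite ?yC ?andbT ?andbF.
rewrite -(big_imset (h := Phi) (A := mem A) (fun P : {set {set T}} => mu #|P| * W h P l)); last first.
  by move=> ? ? _ _; apply: (imset_inj injpre).
apply: eq_bigl => P; apply/idP/andP => [/imsetP[P' HP' ->]|[HP sP]].
  by apply/andP/PhiP; rewrite inE in HP'.
exact: PhiI.
Qed.
End Comb.

Lemma W_union (T : finType) (h : T -> pfun) (al be : {set {set T}}) :
  [disjoint al & be] -> odot (W h al) (W h be) = W h (al :|: be).
Proof.
move=> D; rewrite /W [RHS](big_setID al) /= setUK setDUl setDv set0U.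
have -> : be :\: al = be by apply/setDidPl; rewrite disjoint_sym.
by [].
Qed.

Lemma part_disj (T : finType) (al be : {set {set T}}) S1 S2 :
  partition al S1 -> partition be S2 -> [disjoint S1 & S2] -> [disjoint al & be].
Proof.
move=> H1 H2 D; apply/pred0P => C /=; apply/negP => /andP[C1 C2].
have /set0Pn [x xC] := partition_neq0 H1 C1.
have x1 : x \in S1 := subsetP (partitionS H1 C1) x xC.
have x2 : x \in S2 := subsetP (partitionS H2 C2) x xC.
by rewrite (disjointFr D x1) in x2.
Qed.

Lemma odot_cS (T : finType) (h : T -> pfun) (S1 S2 : {set T}) l : [disjoint S1 & S2] ->
  odot (cS S1 h) (cS S2 h) l =
  \sum_(al | partition al S1) \sum_(be | partition be S2)
     mu #|al| * mu #|be| * W h (al :|: be) l.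
Proof.
move=> D; rewrite {1}/cS odot_sumL; apply: eq_bigr => al Hal.
rewrite /cS odot_sumR mulr_sumr; apply: eq_bigr => be Hbe.
by rewrite W_union ?mulrA // (part_disj Hal Hbe D).
Qed.

Lemma mu_identity m :
  \sum_(j < m.+1) ('C(m, j))%:R * (mu j.+1 * mu (m - j).+1) = - mu m.+2.
Proof.
rewrite /mu /=.
have E : forall j : 'I_m.+1, ('C(m, j))%:R *
   ((-1) ^+ j * (j`!)%:R * ((-1) ^+ (m - j) * ((m - j)`!)%:R)) =
   (-1) ^+ m * (m`!)%:R :> rat.
  move=> j; have jm : (j <= m)%N by rewrite -ltnS.
  rewrite -(bin_fact jm) natrM natrM.
  by rewrite mulrACA -exprD subnKC //; exact: mulrCA.
rewrite (eq_bigr _ (fun j _ => E j)) sumr_const card_ord.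
by rewrite -mulr_natr exprS factS natrM; ring.
Qed.

Lemma sum_sub_count (U : finType) (Y : {set U}) (phi : nat -> rat) :
  \sum_(D : {set U} | D \subset Y) phi #|D| =
  \sum_(j < #|Y|.+1) ('C(#|Y|, j))%:R * phi j.
Proof.
rewrite (partition_big (fun D : {set U} => inord #|D| : 'I_#|Y|.+1) xpredT) //=.
apply: eq_bigr => j _.
have E : forall D : {set U}, (D \subset Y) && (inord #|D| == j) =
                             (D \in [set D : {set U} | D \subset Y & #|D| == j]).
  move=> D; rewrite inE; case sD: (D \subset Y) => //=.
  have lt : (#|D| < #|Y|.+1)%N by rewrite ltnS subset_leq_card.
  by rewrite -val_eqE /= inordK.
rewrite (eq_bigl _ _ E) (eq_bigr (fun _ => phi j)); last first.
  by move=> D; rewrite inE => /andP[_ /eqP ->].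
by rewrite sumr_const cards_draws mulr_natl.
Qed.

Lemma inner_identity (U : finType) (R : {set U}) x y :
  x \in R -> y \in R -> x != y ->
  \sum_(al : {set U} | (al \subset R) && (x \in al) && (y \notin al))
     mu #|al| * mu (#|R| - #|al|) = - mu #|R|.
Proof.
move=> xR yR xy.
pose Y := R :\ x :\ y.
have cR : #|R| = #|Y|.+2.
  rewrite (cardsD1 x R) xR (cardsD1 y (R :\ x)) !inE eq_sym xy yR.
  by rewrite add1n add1n.
have YR : forall z, z \in Y = [&& z != y, z != x & z \in R].
  by move=> z; rewrite !inE.
have xY : forall D : {set U}, D \subset Y -> x \notin D.
  by move=> D sD; apply/negP => /(subsetP sD); rewrite YR eqxx andbF.
pose A := [set D : {set U} | D \subset Y].
rewrite (eq_bigl (mem ((fun D => x |: D) @: A))); last first.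
  move=> al; change (((al \subset R) && (x \in al) && (y \notin al)) = (al \in [set x |: D | D in A])).
  apply/idP/imsetP => [/andP[/andP[sR xal] yal]|[D]]; last first.
    rewrite inE => sD ->; rewrite setU11 andbT; apply/andP; split.
      apply/subsetP => z; rewrite !inE => /orP[/eqP->//|/(subsetP sD)].
      by rewrite YR => /and3P[].
    rewrite !inE negb_or eq_sym xy /=; apply/negP => /(subsetP sD).
    by rewrite YR eqxx.
  exists (al :\ x); last by rewrite setD1K.
  rewrite inE; apply/subsetP => z; rewrite !inE => /andP[zx zal].
  rewrite zx (subsetP sR _ zal) andbT andbT.
  by apply: contraNneq yal => <-.
rewrite big_imset /=; last first.
  by move=> D1 D2; rewrite !inE => s1 s2 E; rewrite -(setU1K (xY _ s1)) E setU1K // xY.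
rewrite /A; under eq_bigl do rewrite inE.
under eq_bigr => D sD do rewrite cardsU1 (xY _ sD) add1n cR.
rewrite (sum_sub_count Y (fun j => mu j.+1 * mu (#|Y|.+2 - j.+1))).
rewrite cR -mu_identity; apply: eq_bigr => j _.
by rewrite subSS subSn // -ltnS.
Qed.

Section Main.
Variables (T : finType) (h : T -> pfun).

Lemma part_sub (rho al : {set {set T}}) D :
  partition rho D -> al \subset rho -> partition al (cover al).
Proof.
move=> /and3P[_ tr n0] sub; apply/and3P; split => //.
  exact: trivIsetS tr.
by apply: contra n0 => /(subsetP sub).
Qed.

Lemma cover_pblock (rho al : {set {set T}}) x :
  partition rho setT -> al \subset rho -> (x \in cover al) = (pblock rho x \in al).
Proof.
move=> Hr sub; have tr := partition_trivIset Hr.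
apply/bigcupP/idP => [[C Ca xC]|Ha]; last first.
  by exists (pblock rho x) => //; rewrite mem_pblock (cover_partition Hr) inE.
by rewrite (def_pblock tr (subsetP sub _ Ca) xC).
Qed.

Lemma setUDK' (A B : {set {set T}}) : A \subset B -> A :|: (B :\: A) = B.
Proof.
move=> sAB; apply/setP => C; rewrite !inE.
by case CA: (C \in A) => //=; rewrite (subsetP sAB _ CA).
Qed.

Lemma reindex_beta (al : {set {set T}}) (K : {set {set T}} -> rat) :
  partition al (cover al) ->
  \sum_(be | partition be (~: cover al)) K be =
  \sum_(rho | partition rho setT && (al \subset rho)) K (rho :\: al).
Proof.
move=> Ha.
pose Ra := [set rho : {set {set T}} | partition rho setT & al \subset rho].
have injd : {in Ra &, injective (fun rho => rho :\: al)}.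
  move=> r1 r2; rewrite !inE => /andP[_ s1] /andP[_ s2] E.
  by rewrite -(setUDK' s1) E setUDK'.
rewrite [RHS](eq_bigl (mem Ra)); last by move=> r; rewrite /= inE.
rewrite -(big_imset _ injd); apply: eq_bigl => be /=.
change (partition be (~: cover al) = (be \in [set rho :\: al | rho in Ra])).
apply/idP/imsetP => [Hb|[rho]]; last first.
  rewrite inE => /andP[Hr sub] ->.
  have tr := partition_trivIset Hr.
  apply/and3P; split.
  - apply/eqP/setP => x; rewrite inE (cover_pblock x Hr sub).
    apply/bigcupP/idP => [[C]|Hx].
      rewrite inE => /andP[Ca Cr] xC.
      by rewrite (def_pblock tr Cr xC).
    exists (pblock rho x); last by rewrite mem_pblock (cover_partition Hr) inE.
    by rewrite inE Hx pblock_mem // (cover_partition Hr) inE.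
  - exact: trivIsetD.
  - by rewrite inE (partition0 Hr) andbF.
have D : [disjoint al & be].
  apply: (part_disj Ha Hb); rewrite -setI_eq0 setICr //.
exists (al :|: be).
  rewrite inE subsetUl andbT; apply/and3P; split.
  - rewrite /cover bigcup_setU -/(cover al) -/(cover be).
    by rewrite (cover_partition Hb) setUCr.
  - apply: trivIsetU; [exact: partition_trivIset Ha|exact: partition_trivIset Hb|].
    by rewrite (cover_partition Hb) -setI_eq0 setICr.
  - by rewrite inE (partition0 Ha) (partition0 Hb).
rewrite setDUl setDv set0U; apply/esym/setDidPl; by rewrite disjoint_sym.
Qed.
End Main.

Section Main2.
Variables (T : finType) (h : T -> pfun).

Definition Pal (a b : T) (al : {set {set T}}) :=
  [&& partition al (cover al), a \in cover al & b \notin cover al].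

Lemma ML (a b : T) (l : intpart) : a != b ->
  \sum_(P | partition P setT && (pblock P a == pblock P b)) mu #|P| * W h P l =
  cS setT h l + \sum_(A : {set T} | A \subset [set x | (x != a) && (x != b)])
     odot (cS (a |: A) h) (cS (b |: ([set x | (x != a) && (x != b)] :\: A)) h) l.
Proof.
move=> ab; set X := [set x | (x != a) && (x != b)].
have E1 : forall A : {set T}, A \subset X ->
  odot (cS (a |: A) h) (cS (b |: (X :\: A)) h) l =
  \sum_(al | partition al (a |: A)) \sum_(be | partition be (~: cover al))
     mu #|al| * mu #|be| * W h (al :|: be) l.
  move=> A sA.
  have -> : b |: (X :\: A) = ~: (a |: A).
    apply/setP => x; rewrite !inE; case: (eqVneq x b) => [->|xb] /=.
      rewrite eq_sym (negbTE ab) /=; apply/esym/negP => /(subsetP sA).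
      by rewrite inE eqxx andbF.
    by rewrite andbT negb_or; case: (x \in A); rewrite ?andbF ?andbT.
  rewrite odot_cS; last by rewrite -setI_eq0 setICr.
  by apply: eq_bigr => al Hal; rewrite (cover_partition Hal).
rewrite (eq_bigr _ E1).
rewrite (exchange_big_dep (Pal a b)) /=; last first.
  move=> A al sA Hal; rewrite /Pal (cover_partition Hal) Hal setU11 /=.
  rewrite !inE negb_or eq_sym ab /=; apply/negP => /(subsetP sA).
  by rewrite inE eqxx andbF.
transitivity (cS [set: T] h l + \sum_(al | Pal a b al)
   \sum_(rho | partition rho setT && (al \subset rho))
    mu #|al| * mu (#|rho| - #|al|) * W h rho l); last first.
  congr (_ + _); apply: eq_bigr => al /and3P[Hal aal bal].
  rewrite (big_pred1 (cover al :\ a)); last first.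
    move=> A /=; apply/andP/eqP => [[sA HA]|->].
      by rewrite (cover_partition HA) setU1K //; apply/negP => /(subsetP sA); rewrite inE eqxx.
    split; last by rewrite setD1K.
    apply/subsetP => x; rewrite !inE => /andP[xa xc]; rewrite xa /=.
    by apply: contraNneq bal => <-.
  rewrite reindex_beta //; apply: eq_bigr => rho /andP[Hr sub].
  rewrite setUDK' // cardsD (setIidPr sub) //.
rewrite (exchange_big_dep (fun rho => partition rho setT)) /=; last first.
  by move=> al rho _ /andP[].
have RHS2 : forall rho, partition rho setT ->
  \sum_(i | Pal a b i && (partition rho setT && (i \subset rho)))
     mu #|i| * mu (#|rho| - #|i|) * W h rho l =
  (if pblock rho a == pblock rho b then 0 else - mu #|rho|) * W h rho l.
  move=> rho Hr; rewrite -mulr_suml; congr (_ * _).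
  transitivity (\sum_(al : {set {set T}} | (al \subset rho) && (pblock rho a \in al) &&
                              (pblock rho b \notin al)) mu #|al| * mu (#|rho| - #|al|)).
    apply: eq_bigl => al; rewrite Hr /=; case sub: (al \subset rho); last by rewrite !andbF.
    rewrite andbT /Pal (part_sub Hr sub) /= !(cover_pblock _ Hr sub).
    by [].
  have aP : pblock rho a \in rho by rewrite pblock_mem // (cover_partition Hr) inE.
  have bP : pblock rho b \in rho by rewrite pblock_mem // (cover_partition Hr) inE.
  case: eqP => [->|/eqP Ne]; last exact: inner_identity.
  by rewrite big1 // => al /andP[/andP[_ ->]].
rewrite (eq_bigr _ RHS2) /cS -big_split /= [LHS]big_mkcondr /=.
apply: eq_bigr => rho Hr; case: ifP => _; first by rewrite mul0r addr0.
by rewrite mulNr addrN.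
Qed.
End Main2.

Lemma sat_inj (T T' : finType) (q : T -> T') (S : {set T}) P :
  {in S &, injective q} -> sat q S P.
Proof.
move=> inj; apply/forallP => x; apply/implyP => xS; apply/forallP => y.
by apply/implyP => yS; apply/implyP => /eqP /(inj _ _ xS yS) ->.
Qed.

Lemma conn_labels (N k0 : nat) (s' : seq nat) (f : nat -> pfun) l :
  uniq (k0 :: s') -> all (fun k => (0 < k <= N.+2)%N) (k0 :: s') ->
  connl (map f (k0 :: s')) l =
  cS [set x : 'I_N.+2 | x.+1 \in k0 :: s'] (fun x => f x.+1) l.
Proof.
move=> Us As.
rewrite /connl conn_cS.
set s := k0 :: s'.
set S := [set x : 'I_N.+2 | x.+1 \in s].
pose q (x : 'I_N.+2) : 'I_(size (map f s)) := inord (index x.+1 s).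
have qv : forall x, x \in S -> val (q x) = index x.+1 s.
  move=> x; rewrite inE => xs; rewrite /q /= inordK //.
  have H : (index x.+1 s < size (map f s))%N by rewrite size_map index_mem.
  exact: H.
have injq : {in S &, injective q}.
  move=> x y xS yS E.
  have xs : x.+1 \in s by rewrite inE in xS.
  have ys : y.+1 \in s by rewrite inE in yS.
  have : index x.+1 s = index y.+1 s by rewrite -!qv // E.
  by move/(index_inj 0%N xs ys) => [] Exy; apply: val_inj.
have surj : forall y, exists2 x, x \in S & q x = y.
  move=> y.
  have ys : (y < size s)%N by rewrite -(size_map f) ltn_ord.
  have ns : nth 0%N s y \in s by apply: mem_nth.
  have /andP[n0 nN] := allP As _ ns.
  have lt : ((nth 0%N s y).-1 < N.+2)%N by rewrite prednK.
  exists (inord (nth 0%N s y).-1).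
    by rewrite inE inordK // prednK.
  apply: val_inj; rewrite qv; last by rewrite inE inordK // prednK.
  by rewrite inordK // prednK // index_uniq.
have -> : (fun i : 'I_(size (map f s)) => nth pone (map f s) i) =
          (fun y l => \prod_(x in S | q x == y) f x.+1 l).
  apply: functional_extensionality => y; apply: functional_extensionality => l'.
  have [x0 x0S <-] := surj y.
  rewrite (big_pred1 x0); last first.
    move=> x /=; apply/andP/eqP => [[xS /eqP E]|->]; first exact: injq.
    by [].
  rewrite qv // (nth_map 0%N); last by rewrite index_mem; rewrite inE in x0S.
  by rewrite nth_index //; rewrite inE in x0S.
rewrite pullback //; apply: eq_bigl => P; rewrite sat_inj ?andbT //.
Qed.

Lemma conn_merge (N : nat) (f : nat -> pfun) l :
  connl (pmul (f 1%N) (f 2%N) :: [seq f i | i <- iota 3 N]) l =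
  \sum_(P : {set {set 'I_N.+2}} | partition P setT &&
          (pblock P ord0 == pblock P (inord 1)))
     mu #|P| * W (fun x : 'I_N.+2 => f x.+1) P l.
Proof.
rewrite /connl conn_cS.
set hs := pmul (f 1%N) (f 2%N) :: [seq f i | i <- iota 3 N].
have szs : size [seq f i | i <- iota 3 N] = N by rewrite size_map size_iota.
pose q (x : 'I_N.+2) : 'I_(size hs) := inord x.-1.
have qv : forall x, val (q x) = x.-1.
  move=> x; rewrite /q /= inordK // szs; have := ltn_ord x; lia.
have v1 : val (inord 1 : 'I_N.+2) = 1%N by rewrite /= inordK.
have ltN : forall y : 'I_(size hs), (val y < N.+1)%N.
  by case=> k /=; rewrite /hs /= szs.
have surj : forall y, exists2 x, x \in [set: 'I_N.+2] & q x = y.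
  move=> y; exists (inord y.+1) => //; apply: val_inj; rewrite qv /= inordK //.
  exact: ltN.
have -> : (fun i : 'I_(size hs) => nth pone hs i) =
          (fun y l => \prod_(x in [set: 'I_N.+2] | q x == y) f x.+1 l).
  apply: functional_extensionality => y; apply: functional_extensionality => l'.
  have qE : forall x (y : 'I_(size hs)), (q x == y) = (x.-1 == val y).
    by move=> x y'; rewrite -val_eqE /= qv.
  rewrite big_mkcond big_ord_recl big_ord_recl !in_setT !qE !lift0 /=.
  have yN := ltN y.
  case: y yN => [[|j] Hj] yN /=.
    rewrite big1 ?mulr1 //.
    by move=> i _; rewrite in_setT qE !lift0.
  rewrite mul1r mul1r.
  have jN : (j < N)%N by [].
  rewrite (bigD1 (Ordinal jN)) //= big1 ?mulr1.
    rewrite in_setT qE !lift0 /= eqxx.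
    by rewrite (nth_map 0%N) ?size_iota // nth_iota.
  move=> i Ni; rewrite in_setT qE !lift0 /=.
  by rewrite eqSS (negbTE (_ : (val i != j))) //; move: Ni; rewrite -val_eqE.
rewrite pullback //; apply: eq_bigl => P.
case Hp: (partition P setT) => //=.
apply/forallP/eqP => [H|E x].
  move: (H ord0); rewrite inE /= => /forallP /(_ (inord 1)); rewrite inE /=.
  by rewrite -val_eqE !qv v1 /= => /eqP.
apply/implyP => _; apply/forallP => y; apply/implyP => _; apply/implyP.
rewrite -val_eqE !qv => /eqP Exy.
case: (eqVneq x y) => [->//|Ne].
have Ne' : val x != val y by rewrite val_eqE.
have hx := ltn_ord x; have hy := ltn_ord y.
have [[x0 y1]|[x1 y0]] : (val x = 0%N /\ val y = 1%N) \/ (val x = 1%N /\ val y = 0%N).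
    have key : forall a b : nat, a.-1 = b.-1 -> a != b ->
        (a = 0%N /\ b = 1%N) \/ (a = 1%N /\ b = 0%N).
      move=> [|[|a]] [|[|b]] //= E1 E2; try lia; by [left|right].
    exact: key.
  have -> : x = ord0 by apply: val_inj.
  have -> : y = inord 1 by apply: val_inj; rewrite v1.
  by rewrite E.
have -> : y = ord0 by apply: val_inj.
have -> : x = inord 1 by apply: val_inj; rewrite v1.
by rewrite E.
Qed.

Section Final.
Variable N : nat.

Definition Am (m : N.-tuple bool) : {set 'I_N.+2} :=
  [set x : 'I_N.+2 | x.+1 \in mask m (iota 3 N)].
Definition Xs : {set 'I_N.+2} := [set x | (x != ord0) && (x != inord 1)].

Lemma memiota (x : 'I_N.+2) : (x.+1 \in iota 3 N) = (2 <= x)%N.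
Proof. have := ltn_ord x; rewrite mem_iota => H; apply/idP/idP; lia. Qed.

Lemma memX (x : 'I_N.+2) : (x \in Xs) = (2 <= x)%N.
Proof.
rewrite inE -!val_eqE /= inordK //.
by case: x => [[|[|x]] Hx].
Qed.

Lemma idx_iota (x : 'I_N.+2) : (2 <= x)%N -> index x.+1 (iota 3 N) = (x - 2)%N.
Proof.
move=> H; have lt : (x - 2 < N)%N by have := ltn_ord x; lia.
have -> : x.+1 = nth 0%N (iota 3 N) (x - 2) by rewrite nth_iota //; lia.
by rewrite index_uniq ?size_iota ?iota_uniq.
Qed.

Lemma memAm (m : N.-tuple bool) (x : 'I_N.+2) : (x \in Am m) = (2 <= x)%N && nth false m (x - 2).
Proof.
rewrite inE in_mask ?iota_uniq // memiota.
by case H: (2 <= x)%N => //=; rewrite idx_iota.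
Qed.

Lemma S1E (m : N.-tuple bool) : [set x : 'I_N.+2 | x.+1 \in 1%N :: mask m (iota 3 N)] = ord0 |: Am m.
Proof.
by apply/setP => x; rewrite /Am !inE -val_eqE /= eqSS.
Qed.

Lemma S2E (m : N.-tuple bool) : [set x : 'I_N.+2 | x.+1 \in 2%N :: mask (map negb m) (iota 3 N)] =
  inord 1 |: (Xs :\: Am m).
Proof.
apply/setP => x; rewrite in_setU1 in_setD memX memAm inE -val_eqE /= inordK //.
rewrite in_cons eqSS in_mask ?iota_uniq // memiota.
case H: (2 <= x)%N; last by rewrite !andbF.
rewrite idx_iota // (nth_map false) ?size_tuple /=; last first.
  by have := ltn_ord x; lia.
by rewrite !andbT.
Qed.

Lemma Am_inj : injective Am.
Proof.
move=> m1 m2 E; apply: val_inj; apply: (@eq_from_nth _ false).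
  by rewrite !size_tuple.
move=> i; rewrite size_tuple => iN.
have lt : (i.+2 < N.+2)%N by [].
move/setP: E => /(_ (inord i.+2)); rewrite !memAm inordK //=.
by rewrite subn2.
Qed.

Lemma reindex_Am (G : {set 'I_N.+2} -> rat) :
  \sum_(m : N.-tuple bool) G (Am m) = \sum_(A : {set 'I_N.+2} | A \subset Xs) G A.
Proof.
transitivity (\sum_(A in Am @: setT) G A); last first.
  apply: eq_bigl => A; apply/imsetP/idP => [[m _ ->]|sA].
    by apply/subsetP => x; rewrite memAm memX => /andP[].
  pose F i := (inord i.+2 : 'I_N.+2) \in A.
  have sz : size (mkseq F N) == N by rewrite size_mkseq.
  exists (Tuple sz) => //; apply/setP => x; rewrite memAm.
  case H: (2 <= x)%N => /=; last first.
    by case xA: (x \in A) => //; move: (subsetP sA x xA); rewrite memX H.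
  rewrite nth_mkseq; last by have := ltn_ord x; lia.
  rewrite /F; congr (_ \in A); apply: val_inj; rewrite /= inordK; last first.
    by have := ltn_ord x; lia.
  lia.
rewrite big_imset /=; last by move=> m1 m2 _ _; apply: Am_inj.
by apply: eq_bigl => m; rewrite in_setT.
Qed.

End Final.

Unset Implicit Arguments.
Set Strict Implicit.

Theorem proposition3p2p7 (n : nat) (f : nat -> pfun) :
  (2 <= n)%N ->
  forall l : intpart,
    connl (pmul (f 1%N) (f 2%N) :: [seq f i | i <- iota 3 (n - 2)]) l =
    connl [seq f i | i <- iota 1 n] l +
    \sum_(m : (n - 2).-tuple bool)
      odot (connl (f 1%N :: [seq f i | i <- mask m (iota 3 (n - 2))]))
           (connl (f 2%N :: [seq f i | i <- mask (map negb m) (iota 3 (n - 2))])) l.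
Proof.
move=> Hn l.
have nE : n = (n - 2)%N.+2 by lia.
move: (n - 2)%N nE => N nE; subst n.
rewrite conn_merge.
pose h := fun x : 'I_N.+2 => f x.+1.
have allm : forall (k : nat) (t : bitseq), (0 < k <= N.+2)%N ->
    all (fun k => (0 < k <= N.+2)%N) (k :: mask t (iota 3 N)).
  move=> k t Hk; rewrite /= Hk /=; apply/allP => z /mem_mask.
  rewrite mem_iota => H; lia.
have uniqm : forall (k : nat) (t : bitseq), (k < 3)%N ->
    uniq (k :: mask t (iota 3 N)).
  move=> k t Hk; rewrite /= mask_uniq ?iota_uniq // andbT.
  by apply/negP => /mem_mask; rewrite mem_iota; lia.
have L0 : connl [seq f i | i <- iota 1 N.+2] = cS [set: 'I_N.+2] h.
  apply: functional_extensionality => l'.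
  have -> : [set: 'I_N.+2] = [set x : 'I_N.+2 | x.+1 \in 1%N :: iota 2 N.+1].
    apply/setP => x; rewrite in_setT in_set -[1%N :: _]/(iota 1 N.+2) mem_iota.
    by have := ltn_ord x; lia.
  have U : uniq (1%N :: iota 2 N.+1) by exact: (iota_uniq 1 N.+2).
  have Al : all (fun k => (0 < k <= N.+2)%N) (1%N :: iota 2 N.+1).
    apply/allP => z; rewrite -[1%N :: _]/(iota 1 N.+2) mem_iota => H; lia.
  exact: (conn_labels (N := N) f l' U Al).
have L1 : forall m : N.-tuple bool,
    connl (f 1%N :: [seq f i | i <- mask m (iota 3 N)]) = cS (ord0 |: Am m) h.
  move=> m; apply: functional_extensionality => l'.
  rewrite -S1E; exact: (conn_labels (N := N) f l'
     (uniqm 1%N m isT) (allm 1%N m isT)).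
have L2 : forall m : N.-tuple bool,
    connl (f 2%N :: [seq f i | i <- mask (map negb m) (iota 3 N)]) =
    cS (inord 1 |: (Xs N :\: Am m)) h.
  move=> m; apply: functional_extensionality => l'.
  rewrite -S2E; exact: (conn_labels (N := N) f l'
     (uniqm 2%N (map negb m) isT) (allm 2%N (map negb m) isT)).
rewrite L0.
transitivity (cS [set: 'I_N.+2] h l + \sum_(m : N.-tuple bool)
   odot (cS (ord0 |: Am m) h) (cS (inord 1 |: (Xs N :\: Am m)) h) l); last first.
  congr (_ + _); apply: eq_bigr => m _; by rewrite L1 L2.
rewrite (reindex_Am (fun A => odot (cS (ord0 |: A) h) (cS (inord 1 |: (Xs N :\: A)) h) l)).
have ab : (ord0 : 'I_N.+2) != inord 1 by rewrite -val_eqE /= inordK.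
exact: (ML h l ab).
Qed.
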